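(* Let $n\ge2$ and $\rho\in\mathbb{C}\setminus\{-1,0,1\}$. If $z_k$ is a zero of $p_{2n}(\rho,z)$, then $z_k\neq0$, $z_k^{-1}$ is also a zero of $p_{2n}(\rho,z)$, $z_k\notin\{\rho,1/\rho\}$, and $$\lambda_k=\frac{z_k(1-\rho^2)}{(z_k-\rho)(1-\rho z_k)}=\frac{z_k^{-1}(1-\rho^2)}{(z_k^{-1}-\rho)(1-\rho z_k^{-1})}$$ is an eigenvalue of $K_n(\rho)$. Conversely, if $\lambda_k$ is an eigenvalue of $K_n(\rho)$, then $\lambda_k\neq0$ and the two numbers $$z_k=\tau_k+(\tau_k^2-1)^{1/2},\qquad z_k^{-1}=\tau_k-(\tau_k^2-1)^{1/2}$$ are zeros of $p_{2n}(\rho,z)$, where $\tau_k=\frac{\rho^2(\lambda_k+1)+\lambda_k-1}{2\lambda_k\rho}$.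
   Context: $K_n(\rho)=\left[\rho^{|j-k|}\right]_{j,k=1}^n$ ($n\times n$, $\rho\in\mathbb{C}$). $p_{2n}(\rho,z)=z^{2n}+(1+\rho^2)\sum_{k=1}^{n-1}z^{2k}-2\rho\sum_{k=0}^{n-1}z^{2k+1}+1$, a monic polynomial of degree $2n$ in $z$, equal to $\frac{z^{2n}(z-\rho)^2-(\rho z-1)^2}{z^2-1}$ for $z\ne\pm1$. *)

(* Defs.v *)
From mathcomp Require Import all_boot all_order all_algebra.
Set Implicit Arguments. Unset Strict Implicit. Unset Printing Implicit Defensive.
Import Order.TTheory GRing.Theory Num.Theory.
Local Open Scope ring_scope.

(* K_n(rho) = [rho^|j-k|]_{j,k}, indices 0..n-1 (shift-invariant) *)
Definition Kmat (C : numClosedFieldType) (n : nat) (rho : C) : 'M[C]_n :=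
  \matrix_(j < n, k < n) rho ^+ (maxn j k - minn j k)%N.

Definition p2n (C : numClosedFieldType) (n : nat) (rho : C) : {poly C} :=
  'X^(2 * n) + (1 + rho ^+ 2) *: (\sum_(1 <= k < n) 'X^(2 * k))
  - (2 * rho) *: (\sum_(0 <= k < n) 'X^(2 * k + 1)) + 1.

Definition lam_of (C : numClosedFieldType) (rho z : C) : C :=
  z * (1 - rho ^+ 2) / ((z - rho) * (1 - rho * z)).

Definition tau_of (C : numClosedFieldType) (rho lam : C) : C :=
  (rho ^+ 2 * (lam + 1) + lam - 1) / (2 * lam * rho).

(* Main.v *)
Require Import Defs.
From mathcomp Require Import all_boot all_order all_algebra.
From mathcomp Require Import ring zify.
Import Order.TTheory GRing.Theory Num.Theory.
Local Open Scope ring_scope.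

Lemma pick (C : numClosedFieldType) n (G : nat -> C) m :
  \sum_(j < n) (if (j : nat) == m then G j else 0) = if (m < n)%N then G m else 0.
Proof.
rewrite -(big_mkord xpredT (fun j => if j == m then G j else 0)).
elim: n => [|n IH]; first by rewrite big_geq.
rewrite big_nat_recr //= IH.
case: (ltngtP m n) => h.
- by rewrite (ltn_trans h (ltnSn n)) addr0.
- by rewrite ltnS leqNgt h addr0.
- by rewrite h ltnSn add0r.
Qed.

Section S.
Variable C : numClosedFieldType.
Variable rho : C.

Fixpoint wseq (t : C) (k : nat) : C :=
  match k with
  | 0 => rho
  | 1 => 1
  | (k'.+1 as k1).+1 => t * wseq t k1 - wseq t k'
  end.

Lemma wseqSS t k : wseq t k.+2 = t * wseq t k.+1 - wseq t k.
Proof. by []. Qed.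

Definition Ssum (z : C) n := \sum_(0 <= i < n) z ^+ (2 * i).

Lemma wdiff z k : z != 0 -> z ^+ k * (wseq (z + z^-1) k.+1 - z * wseq (z + z^-1) k) = 1 - rho * z.
Proof.
move=> z0; elim: k => [|k IH]; first by rewrite /= expr0 mul1r mulrC.
rewrite wseqSS -IH exprS.
have -> : (z + z^-1) * wseq (z + z^-1) k.+1 - wseq (z + z^-1) k - z * wseq (z + z^-1) k.+1
  = z^-1 * (wseq (z + z^-1) k.+1 - z * wseq (z + z^-1) k) by field.
by rewrite mulrA -(mulrA z) (mulrC _ z^-1) mulrA mulrV ?mul1r // unitfE.
Qed.

Lemma wpow z k : z != 0 -> z ^+ k * wseq (z + z^-1) k = rho + (z - rho) * Ssum z k.
Proof.
move=> z0; elim: k => [|k IH]; first by rewrite /Ssum big_geq // expr0 mul1r mulr0 addr0.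
have e : wseq (z + z^-1) k.+1 = z * wseq (z + z^-1) k + z^-k * (1 - rho * z).
  rewrite -(wdiff z k z0) mulrA mulVf ?mul1r ?expf_neq0 //.
  ring.
rewrite e /Ssum big_nat_recl // -/(Ssum z k).
have -> : \sum_(0 <= i < k) z ^+ (2 * i.+1) = z ^+ 2 * Ssum z k.
  by rewrite /Ssum mulr_sumr; apply: eq_bigr => i _; rewrite mulnS exprD.
have -> : forall a b : C, z ^+ k.+1 * (z * a + z^-k * b) = z ^+ 2 * (z ^+ k * a) + z * b.
  move=> a b; rewrite exprS mulrDr; congr (_ + _); last first.
    by rewrite -mulrA (mulrA (z ^+ k)) mulfV ?expf_neq0 ?mul1r.
  by rewrite expr2; ring.
rewrite IH muln0 expr0. ring.
Qed.

Lemma Ssum_pow z n : z ^+ (2 * n) = (z ^+ 2 - 1) * Ssum z n + 1.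
Proof.
elim: n => [|n IH]; first by rewrite /Ssum big_geq // mulr0 add0r.
rewrite /Ssum big_nat_recr //= -/(Ssum z n) mulrDr addrAC -IH mulnS exprD. ring.
Qed.

Lemma p2n_eval n z : (0 < n)%N -> (p2n n rho).[z] = (z - rho) ^+ 2 * Ssum z n + 1 - rho ^+ 2.
Proof.
move=> n0; rewrite /p2n !hornerE !horner_sum.
have e1 : \sum_(1 <= i < n) ('X^(2 * i)).[z] = Ssum z n - 1.
  rewrite /Ssum (big_ltn n0) muln0 expr0 addrC addKr.
  by apply: eq_bigr => i _; rewrite hornerXn.
have e2 : \sum_(0 <= i < n) ('X^(2 * i + 1)).[z] = z * Ssum z n.
  rewrite /Ssum mulr_sumr; apply: eq_bigr => i _; by rewrite hornerXn exprD expr1 mulrC.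
rewrite e1 e2 ?hornerXn Ssum_pow. ring.
Qed.

Lemma key n z : (0 < n)%N -> z != 0 ->
  z ^+ n * (wseq (z + z^-1) n.+1 - rho * wseq (z + z^-1) n) = (p2n n rho).[z].
Proof.
move=> n0 z0; rewrite p2n_eval //.
have -> : wseq (z + z^-1) n.+1 - rho * wseq (z + z^-1) n =
  (wseq (z + z^-1) n.+1 - z * wseq (z + z^-1) n) + (z - rho) * wseq (z + z^-1) n by ring.
rewrite mulrDr wdiff // mulrCA wpow //. ring.
Qed.

Section M.

Variable n : nat.

Definition dd (k : nat) : C := if (0 < k)%N && (k.+1 < n)%N then 1 + rho ^+ 2 else 1.

Definition Tmat : 'M[C]_n := \matrix_(j, k)
  ((if (j : nat) == k then dd k else 0) +
   (if (0 < k)%N && ((j : nat) == k.-1) then - rho else 0) +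
   (if (j : nat) == k.+1 then - rho else 0)).

Lemma sumT (G : nat -> C) (k : 'I_n) :
  \sum_(j < n) G j * Tmat j k = G k * dd k - (if (0 < k)%N then rho * G k.-1 else 0)
     - (if (k.+1 < n)%N then rho * G k.+1 else 0).
Proof.
have hif : forall (b : bool) (a X : C), a * (if b then X else 0) = if b then a * X else 0.
  by move=> [] a X; rewrite ?mulr0.
under eq_bigr => j _ do rewrite mxE !mulrDr !hif.
rewrite !big_split /=.
rewrite (@pick _ _ (fun j => G j * dd k)) ltn_ord.
rewrite (@pick _ _ (fun j => G j * - rho)).
have [k0|k0] := posnP k.
  rewrite big1 // subr0 addr0.
  by case: ifP => _; rewrite ?mulrN ?(mulrC rho) ?oppr0.
under eq_bigr => i _ do rewrite andTb.
rewrite (@pick _ _ (fun j => G j * - rho)).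
have -> : (k.-1 < n)%N by apply: leq_ltn_trans (leq_pred k) (ltn_ord k).
by case: ifP => _; rewrite !mulrN ?(mulrC rho) ?oppr0 ?addr0 ?subr0.
Qed.

Definition Kf (i j : nat) : C := rho ^+ (maxn i j - minn i j).

Lemma Kf_le i j : (i <= j)%N -> Kf i j = rho ^+ (j - i).
Proof. by move=> h; rewrite /Kf (maxn_idPr h) (minn_idPl h). Qed.
Lemma Kf_ge i j : (j <= i)%N -> Kf i j = rho ^+ (i - j).
Proof. by move=> h; rewrite /Kf (maxn_idPl h) (minn_idPr h). Qed.

Lemma KT : (1 < n)%N -> Kmat n rho *m Tmat = (1 - rho ^+ 2)%:M.
Proof.
move=> n1; apply/matrixP => i k; rewrite !mxE.
rewrite (eq_bigr (fun j : 'I_n => Kf i j * Tmat j k)); last by move=> j _; rewrite mxE.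
rewrite sumT /dd.
have kn := ltn_ord k; have iN := ltn_ord i.
case: (ltngtP i k) => h.
- rewrite -val_eqE /= (ltn_eqF h) mulr0n.
  have k0 : (0 < k)%N by lia.
  rewrite k0 /= (@Kf_le _ _ (ltnW h)) Kf_le; last by lia.
  have -> : (k - i = (k.-1 - i).+1)%N by lia.
  case: ifP => h2.
    rewrite Kf_le; last by lia.
    have -> : (k.+1 - i = (k.-1 - i).+2)%N by lia.
    rewrite !exprS; ring.
  rewrite exprS; ring.
- rewrite -val_eqE /= (gtn_eqF h) mulr0n.
  have -> : (k.+1 < n)%N by lia.
  rewrite (@Kf_ge _ _ (ltnW h)) (@Kf_ge i k.+1) //.
  have -> : (i - k = (i - k.+1).+1)%N by lia.
  have [k0|k0] := posnP k.
    by rewrite k0 /= exprS; ring.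
  rewrite /= Kf_ge; last by lia.
  have -> : (i - k.-1 = (i - k.+1).+2)%N by lia.
  rewrite !exprS; ring.
- rewrite -val_eqE /= h eqxx mulr1n Kf_le // subnn expr0.
  have [k0|k0] := posnP k.
    rewrite k0 /= n1 Kf_le //. rewrite subSn // subnn expr1. ring.
  rewrite /= Kf_ge; last by lia.
  have -> : (k - k.-1 = 1)%N by lia.
  case: ifP => h2.
    rewrite Kf_le //; rewrite subSn // subnn; ring.
  ring.
Qed.

Lemma cnz : rho != 1 -> rho != -1 -> 1 - rho ^+ 2 != 0.
Proof.
move=> r1 rm1; rewrite -{1}(expr1n C 2) subr_sqr mulf_neq0 //.
  by rewrite subr_eq0 eq_sym.
by rewrite addrC addr_eq0.
Qed.

Lemma TK : (1 < n)%N -> 1 - rho ^+ 2 != 0 -> Tmat *m Kmat n rho = (1 - rho ^+ 2)%:M.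
Proof.
move=> n1 c0.
have h : ((1 - rho ^+ 2)^-1 *: Kmat n rho) *m Tmat = 1%:M.
  by rewrite -scalemxAl KT // scale_scalar_mx mulVf.
have := mulmx1C h; rewrite -scalemxAr => e.
have -> : Tmat *m Kmat n rho = (1 - rho ^+ 2) *: ((1 - rho ^+ 2)^-1 *: (Tmat *m Kmat n rho)) by rewrite scalerA mulfV // scale1r.
by rewrite e scale_scalar_mx mulr1.
Qed.

Lemma fwd z : (1 < n)%N -> z != 0 -> root (p2n n rho) z ->
  (\row_(j < n) wseq (z + z^-1) j.+1) *m Tmat =
  (1 + rho ^+ 2 - rho * (z + z^-1)) *: (\row_(j < n) wseq (z + z^-1) j.+1).
Proof.
move=> n1 z0 r; set t := z + z^-1.
apply/rowP => k; rewrite !mxE.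
rewrite (eq_bigr (fun j : 'I_n => wseq t j.+1 * Tmat j k)); last by move=> j _; rewrite mxE.
rewrite (sumT (fun j => wseq t j.+1)) /dd.
have kn := ltn_ord k.
have w1 : wseq t 1 = 1 by [].
have w2 : wseq t 2 = t - rho by rewrite wseqSS w1 mulr1.
have [k0|k0] := posnP k.
  rewrite k0 n1 w1 w2 andFb; ring.
rewrite (prednK k0) andTb.
case: ifP => h2.
  rewrite wseqSS; ring.
have en : n = k.+1.
  by move/negbT: h2; rewrite -leqNgt => h2; apply/eqP; rewrite eqn_leq h2 kn.
have hk := @key k.+1 z (ltn0Sn k) z0.
rewrite en in r; rewrite (rootP r) in hk.
move/eqP: hk; rewrite mulf_eq0 expf_eq0 (negbTE z0) andbF orFb -/t wseqSS => /eqP hk.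
apply/eqP; rewrite -subr_eq0.
have -> : wseq t k.+1 * 1 - rho * wseq t k - 0 - (1 + rho ^+ 2 - rho * t) * wseq t k.+1
  = rho * (t * wseq t k.+1 - wseq t k - rho * wseq t k.+1) by ring.
by rewrite hk mulr0.
Qed.

Lemma bwd z (v : 'rV[C]_n) (G : nat -> C) : (1 < n)%N -> rho != 0 -> z != 0 ->
  (forall j : 'I_n, v 0 j = G j) -> v != 0 ->
  v *m Tmat = (1 + rho ^+ 2 - rho * (z + z^-1)) *: v -> root (p2n n rho) z.
Proof.
move=> n1 r0 z0 hG vn0 hv; set t := z + z^-1; set mu := 1 + rho ^+ 2 - rho * t.
have eqk : forall k, (k < n)%N -> G k * dd k - (if (0 < k)%N then rho * G k.-1 else 0)
   - (if (k.+1 < n)%N then rho * G k.+1 else 0) = mu * G k.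
  move=> k kn; have := congr1 (fun M : 'M[C]_(1, n) => M 0 (Ordinal kn)) hv; rewrite !mxE.
  rewrite (eq_bigr (fun j : 'I_n => G j * Tmat j (Ordinal kn))); last by move=> j _; rewrite hG.
  by rewrite sumT hG.
have w1 : wseq t 1 = 1 by [].
have claim : forall j, (j.+1 < n)%N -> G j = G 0%N * wseq t j.+1 /\ G j.+1 = G 0%N * wseq t j.+2.
  elim => [|j IH] hj.
    split; first by rewrite w1 mulr1.
    have := eqk 0%N (ltnW hj); rewrite /dd /= hj => e.
    apply: (mulfI r0).
    have -> : rho * G 1%N = G 0%N - mu * G 0%N by rewrite -e; ring.
    rewrite /mu; ring.
  have [h1 h2] := IH (ltnW hj).
  split; first by [].
  have e := eqk j.+1 (ltnW hj); rewrite /dd ltn0Sn hj andTb -[j.+1.-1]/j in e.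
  apply: (mulfI r0).
  have -> : rho * G j.+2 = G j.+1 * (1 + rho ^+ 2) - rho * G j - mu * G j.+1 by rewrite -e; ring.
  rewrite h1 h2 (wseqSS t j.+1) /mu; ring.
have g0 : G 0%N != 0.
  apply/negP => /eqP g0; apply: (negP vn0); apply/eqP/rowP => j.
  rewrite !mxE hG; case: j => [[|j] hj] /=; first by [].
  by have [_ ->] := claim j hj; rewrite g0 mul0r.
have [m en] : exists m, n = m.+2 by exists n.-2; lia.
have := eqk m.+1; rewrite en ltnSn => /(_ isT); rewrite /dd en ltnn andbF /= => e.
have hm : (m.+1 < n)%N by rewrite en.
have [h1 h2] := claim m hm.
have hk := @key m.+2 z (ltn0Sn m.+1) z0.
apply/rootP; rewrite -hk.
have -> : wseq (z + z^-1) m.+3 - rho * wseq (z + z^-1) m.+2 = 0; last by rewrite mulr0.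
have : G 0%N * (rho * (t * wseq t m.+2 - wseq t m.+1 - rho * wseq t m.+2)) = 0.
  move: e; rewrite h1 h2 /mu => e.
  apply/eqP; rewrite -subr_eq0 -(subrr (G 0%N * wseq t m.+2 * 1 - rho * (G 0%N * wseq t m.+1) - 0)).
  apply/eqP. rewrite {2}e. ring.
move/eqP; rewrite !mulf_eq0 (negbTE g0) (negbTE r0) !orFb => /eqP hx.
by rewrite -/t wseqSS.
Qed.

End M.
End S.

Theorem theorem3p3 (C : numClosedFieldType) (n : nat) (rho : C) :
  (2 <= n)%N -> rho != 0 -> rho != 1 -> rho != -1 ->
  (forall z : C, root (p2n n rho) z ->
     [/\ z != 0, root (p2n n rho) z^-1, z != rho & z != rho^-1] /\
     lam_of rho z = lam_of rho z^-1 /\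
     eigenvalue (Kmat n rho) (lam_of rho z)) /\
  (forall lam : C, eigenvalue (Kmat n rho) lam ->
     [/\ lam != 0,
         root (p2n n rho) (tau_of rho lam + sqrtC (tau_of rho lam ^+ 2 - 1)) &
         root (p2n n rho) (tau_of rho lam - sqrtC (tau_of rho lam ^+ 2 - 1))]).
Proof.
move=> n2 r0 r1 rm1.
have c0 := @cnz C rho r1 rm1.
have n0 : (0 < n)%N by apply: ltnW.
have pz : forall z, z != 0 -> root (p2n n rho) z ->
    wseq C rho (z + z^-1) n.+1 - rho * wseq C rho (z + z^-1) n = 0.
  move=> z z0 r; have := @key C rho n z n0 z0; rewrite (rootP r) => /eqP.
  by rewrite mulf_eq0 expf_eq0 (negbTE z0) andbF orFb => /eqP.
have prho : (p2n n rho).[rho] = 1 - rho ^+ 2.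
  by rewrite (@p2n_eval C rho n) // subrr expr2 !mul0r add0r.
split.
- move=> z r.
  have z0 : z != 0.
    have h0 : (0 : C) ^+ (2 * n) = 0 by rewrite expr0n; case: (n) n0.
    have hS := @Ssum_pow C 0 n; rewrite h0 expr2 mul0r sub0r mulN1r in hS.
    have eS : Ssum C 0 n = 1.
      by move/eqP: hS; rewrite eq_sym addrC subr_eq0 eq_sym => /eqP.
    have p0 : (p2n n rho).[0] = 1.
      by rewrite (@p2n_eval C rho n) // eS sub0r sqrrN mulr1 addrAC subrr add0r.
    by apply/eqP => e; move: r; rewrite e /root p0 oner_eq0.
  have t_eq : z^-1 + z^-1^-1 = z + z^-1 by rewrite invrK addrC.
  have rinv : root (p2n n rho) z^-1.
    by apply/rootP; rewrite -(@key C rho n z^-1 n0 (invr_neq0 z0)) t_eq (pz z z0 r) mulr0.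
  have zr : z != rho.
    by apply/eqP => e; move: r; rewrite e /root prho (negbTE c0).
  have zri : z != rho^-1.
    by apply/eqP => e; move: rinv; rewrite e invrK /root prho (negbTE c0).
  have d1 : z - rho != 0 by rewrite subr_eq0.
  have d2 : 1 - rho * z != 0.
    apply: contra zri; rewrite subr_eq0 => /eqP e; apply/eqP.
    by rewrite -[z]mul1r -(mulVf r0) -mulrA -e mulr1.
  have d3 : z^-1 - rho != 0.
    apply: contra d2 => /eqP e; apply/eqP.
    have -> : 1 - rho * z = z * (z^-1 - rho) by field.
    by rewrite e mulr0.
  have d4 : 1 - rho * z^-1 != 0.
    apply: contra d1 => /eqP e; apply/eqP.
    have -> : z - rho = z * (1 - rho * z^-1) by field.
    by rewrite e mulr0.
  split; first by split.
  split.
    rewrite /lam_of; field.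
    by rewrite z0 d1 mulNr d2.
  apply/eigenvalueP.
  set v := \row_(j < n) wseq C rho (z + z^-1) j.+1.
  exists v; last first.
    apply/eqP => /rowP /(_ (Ordinal n0)); rewrite !mxE /= => /eqP.
    by rewrite oner_eq0.
  have hT := @fwd C rho n z n2 z0 r.
  set mu := 1 + rho ^+ 2 - rho * (z + z^-1) in hT.
  have emu : mu = (z - rho) * (1 - rho * z) / z by rewrite /mu; field.
  have mu0 : mu != 0 by rewrite emu !mulf_neq0 ?invr_neq0.
  have e : mu *: (v *m Kmat n rho) = (1 - rho ^+ 2) *: v.
    by rewrite scalemxAl -hT -mulmxA TK // mul_mx_scalar.
  have -> : v *m Kmat n rho = mu^-1 *: (mu *: (v *m Kmat n rho)).
    by rewrite scalerA mulVf // scale1r.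
  rewrite e scalerA; congr (_ *: _).
  rewrite emu /lam_of; field.
  by rewrite z0 d1 d2.
- move=> lam /eigenvalueP [v hv vn0].
  have e : (1 - rho ^+ 2) *: v = lam *: (v *m Tmat C rho n).
    by rewrite scalemxAl -hv -mulmxA KT // mul_mx_scalar.
  have l0 : lam != 0.
    apply/eqP => l0; move: e; rewrite l0 scale0r => /eqP.
    by rewrite scaler_eq0 (negbTE c0) (negbTE vn0).
  have hT : v *m Tmat C rho n = (lam^-1 * (1 - rho ^+ 2)) *: v.
    by rewrite -scalerA e scalerA mulVf // scale1r.
  have two0 : (2 : C) != 0 by rewrite pnatr_eq0.
  have main : forall z, z ^+ 2 - 2 * tau_of rho lam * z + 1 = 0 -> root (p2n n rho) z.
    move=> z hz.
    have z0 : z != 0.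
      apply/eqP => e0; move: hz; rewrite e0 expr2 !mul0r mulr0 subr0 add0r => /eqP.
      by rewrite oner_eq0.
    have tz : z + z^-1 = 2 * tau_of rho lam.
      apply: (mulfI z0); apply/eqP; rewrite -subr_eq0; apply/eqP; rewrite -hz; field; done.
    refine (@bwd C rho n z v (fun j => if (insub j : option 'I_n) is Some i then v 0 i else 0) n2 r0 z0 _ vn0 _).
      by move=> j; rewrite valK.
    rewrite hT tz; congr (_ *: _); rewrite /tau_of; field.
    by rewrite r0 l0.
  split => //; apply: main.
    transitivity (sqrtC (tau_of rho lam ^+ 2 - 1) ^+ 2 - (tau_of rho lam ^+ 2 - 1)); first ring.
    by rewrite sqrtCK subrr.
  transitivity (sqrtC (tau_of rho lam ^+ 2 - 1) ^+ 2 - (tau_of rho lam ^+ 2 - 1)); first ring.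
  by rewrite sqrtCK subrr.
Qed.
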